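(* Fix a level $\ell$ with $SS_\ell>0$ and an integer shift $G$, let $B=2^b$, and write $W_\ell 2^G=q_\ell+f_\ell$ with $q_\ell=\lfloor W_\ell 2^G\rfloor$ and $f_\ell\in[0,1)$ (so $A_\ell(G)=q_\ell+1$). Conditioned on an outer iteration of the inter-level sampler reaching the boundary case $x=A_\ell(G)$ at level $\ell$, the refinement loop accepts level $\ell$ with probability exactly $f_\ell$ and abandons the outer iteration (restarting the procedure) with probability exactly $1-f_\ell$.
   Context: Fix an integer $b\ge 2$. There is a set $\mathcal L$ of $N$ levels, which are consecutive integers. Each level $\ell$ holds a finite (possibly empty) multiset of normalized significands, each an integer in $[2^{b-1},2^b)$. Let $z$ be the total number of stored significands over all levels; assume $z<2^b$. For each level, $SS_\ell$ is the sum of its significands (so $SS_\ell=0$ iff the level is empty); set $SS_\ell=0$ for integers $\ell\notin\mathcal L$. The level weight is $W_\ell=SS_\ell2^\ell$. For an integer global shift $G$, $A_\ell(G)=\lfloor W_\ell2^G\rfloor+1$ if $SS_\ell>0$ and $A_\ell(G)=0$ if $SS_\ell=0$; $A(G)=\sum_\ell A_\ell(G)$ and $M(G)=\sum_\ell W_\ell2^G$. The configuration is nonempty if $z\ge1$. Inter-level sampler (Algorithm 1), with shift $G$ and $A=A(G)$: it performs independent outer iterations. In an outer iteration, draw $x$ uniformly from $\{1,\dots,A\}$ and scan the levels in decreasing order starting from the largest nonempty level. At the current level $\ell$: if $x<A_\ell(G)$, return $\ell$; if $x=A_\ell(G)$, run the refinement loop for $m=1,2,\dots$: draw $r$ uniformly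 from $\{0,\dots,2^b-1\}$ independently, let $t=\lfloor SS_\ell 2^{\ell+G+mb}\rfloor \bmod 2^b$; if $r<t$ return $\ell$; else if $r>t$ or $\ell+G+mb\ge 0$, abandon this outer iteration and start a new one; otherwise continue with $m+1$. If $x>A_\ell(G)$, set $x\leftarrow x-A_\ell(G)$ and move to the next lower level. *)

(* Defs.v *)
From mathcomp Require Import all_boot all_order all_algebra.
Set Implicit Arguments. Unset Strict Implicit. Unset Printing Implicit Defensive.
Import Order.TTheory GRing.Theory Num.Theory.
Local Open Scope ring_scope.

(* Level i : 'I_N of the configuration is the integer  lo + i  (N consecutive
   levels).  sig i is the multiset (a seq) of significands stored at level i. *)

Definition SSum (s : seq nat) : nat := sumn s.

(* SS * 2^e as a rational, e an integer exponent; with e = l + G this is W_l 2^G *)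
Definition scaledW (SS : nat) (e : int) : rat := (SS%:R : rat) * (2%:R : rat) ^ e.

Definition Aval (SS : nat) (e : int) : nat :=
  if (0 < SS)%N then (`|Num.floor (scaledW SS e)|%N).+1 else 0%N.

Definition lvl_exp (lo : int) (N : nat) (i : 'I_N) (G : int) : int :=
  lo + (nat_of_ord i)%:Z + G.

Definition Aof (b : nat) (lo : int) (N : nat) (sig : 'I_N -> seq nat) (G : int)
  (i : 'I_N) : nat := Aval (SSum (sig i)) (lvl_exp lo i G).

Definition Atot (b : nat) (lo : int) (N : nat) (sig : 'I_N -> seq nat) (G : int) : nat :=
  (\sum_(i < N) Aof b lo sig G i)%N.

Definition scan_order (N : nat) (sig : 'I_N -> seq nat) : seq 'I_N :=
  [seq i <- rev (enum 'I_N) | (0 < SSum (sig i))%N].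

Fixpoint scan (N : nat) (A : 'I_N -> nat) (ls : seq 'I_N) (x : nat)
  : option ('I_N * bool) :=
  match ls with
  | [::] => None
  | i :: ls' =>
      if (x < A i)%N then Some (i, false)
      else if x == A i then Some (i, true)
      else scan A ls' (x - A i)
  end.

(* Refinement loop at a level with sum SS and exponent e = l + G, currently at
   step m, consuming the independent uniform draws rs (values in [0, 2^b)).
   Returns true = "return l", false = "abandon the outer iteration". *)
Fixpoint refine (b SS : nat) (e : int) (m : nat) (rs : seq nat) : bool :=
  match rs with
  | [::] => false
  | r :: rs' =>
      let k := e + (m * b)%N%:Z in
      let t := (Num.floor (scaledW SS k) %% (2 ^ b)%N%:Z)%Z in
      if r%:Z < t then true
      else if (t < r%:Z) || (0 <= k) then false
      else refine b SS e m.+1 rs'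
  end.

Inductive outcome := Ret of nat | Abandon.

Definition is_ret (l : nat) (o : outcome) : bool :=
  if o is Ret i then i == l else false.
Definition is_abandon (o : outcome) : bool :=
  if o is Abandon then true else false.

Definition outer_iter (b : nat) (lo : int) (N : nat) (sig : 'I_N -> seq nat)
  (G : int) (x : nat) (rs : seq nat) : outcome :=
  match scan (Aof b lo sig G) (scan_order sig) x with
  | Some (i, false) => Ret i
  | Some (i, true) =>
      if refine b (SSum (sig i)) (lvl_exp lo i G) 1 rs then Ret i else Abandon
  | None => Abandon
  end.

(* Sample space of one outer iteration: x uniform in {1,...,A} (encoded as
   x' : 'I_A with x = x'+1) and K independent uniform draws in {0,...,2^b-1}. *)
Notation sample_space b lo sig G K :=
  ('I_(Atot b lo sig G) * K.-tuple 'I_(2 ^ b))%type.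

Definition boundary_ev (b : nat) (lo : int) (N : nat) (sig : 'I_N -> seq nat)
  (G : int) (K : nat) (l : 'I_N) : pred (sample_space b lo sig G K) :=
  fun p => scan (Aof b lo sig G) (scan_order sig) (nat_of_ord (fst p)).+1 == Some (l, true).

Arguments boundary_ev : clear implicits.

Definition accept_ev (b : nat) (lo : int) (N : nat) (sig : 'I_N -> seq nat)
  (G : int) (K : nat) (l : 'I_N) : pred (sample_space b lo sig G K) :=
  fun p => boundary_ev b lo N sig G K l p &&
    is_ret l (outer_iter b lo sig G (nat_of_ord (fst p)).+1 (map val (tval (snd p)))).

Definition abandon_ev (b : nat) (lo : int) (N : nat) (sig : 'I_N -> seq nat)
  (G : int) (K : nat) (l : 'I_N) : pred (sample_space b lo sig G K) :=
  fun p => boundary_ev b lo N sig G K l p &&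
    is_abandon (outer_iter b lo sig G (nat_of_ord (fst p)).+1 (map val (tval (snd p)))).

Definition cond_prob (T : finType) (E C : pred T) : rat :=
  (#|[pred p | E p && C p]|%:R) / (#|C|%:R).
Arguments accept_ev : clear implicits.
Arguments abandon_ev : clear implicits.

(* Main.v *)
Require Import Defs.
From mathcomp Require Import all_boot all_order all_algebra.
From mathcomp Require Import zify ring lra.
Import Order.TTheory GRing.Theory Num.Theory.
Local Open Scope ring_scope.

Definition frac (y : rat) : rat := y - (Num.floor y)%:~R.

Lemma frac_ge0 y : 0 <= frac y.
Proof. rewrite /frac subr_ge0; exact: floor_le. Qed.
Lemma frac_lt1 y : frac y < 1.
Proof. rewrite /frac ltrBlDr addrC -[1]/(1%:~R) -intrD; exact: floorD1_gt. Qed.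

Lemma digit (B : int) (y : rat) : 0 < B ->
  let d := (Num.floor (B%:~R * y) %% B)%Z in
  [/\ 0 <= d, d < B & B%:~R * frac y = d%:~R + frac (B%:~R * y)].
Proof.
move=> B0 d.
set z := Num.floor y.
have hy : B%:~R * y = B%:~R * frac y + (B * z)%:~R.
  by rewrite /frac intrM; ring.
have hf : Num.floor (B%:~R * y) = Num.floor (B%:~R * frac y) + B * z.
  by rewrite hy floorDrz ?intr_int // intrKfloor.
have d0 : 0 <= Num.floor (B%:~R * frac y).
  by rewrite floor_ge0 mulr_ge0 ?frac_ge0 // ler0z ltW.
have dB : Num.floor (B%:~R * frac y) < B.
  rewrite floor_lt_int -[X in _ < X]mulr1 ltr_pM2l ?frac_lt1 //.
  by rewrite ltr0z.
have dE : d = Num.floor (B%:~R * frac y).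
  rewrite /d hf addrC mulrC modzMDl modz_small //; by rewrite d0 dB.
split; rewrite ?dE //.
rewrite /frac hf intrD; rewrite -/(frac y); set F := frac y; rewrite hy intrM /F; ring.
Qed.

Lemma scaledW_add SS k (b : nat) :
  scaledW SS (k + b%:Z) = (2 ^ b)%N%:R * scaledW SS k.
Proof.
rewrite /scaledW expfzDr ?pnatr_eq0 // natrX.
have -> : (2%:R : rat) ^ (b%:Z) = 2%:R ^+ b by [].
ring.
Qed.

Lemma scaledW_int SS (k : int) : 0 <= k -> frac (scaledW SS k) = 0.
Proof.
case: k => // n _.
have -> : scaledW SS n = ((SS * 2 ^ n)%N%:Z)%:~R.
  by rewrite /scaledW -pmulrn natrM natrX.
by rewrite /frac intrKfloor subrr.
Qed.

Lemma sum_tuple_cons (n B : nat) (F : seq nat -> nat) :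
  (\sum_(t : n.+1.-tuple 'I_B) F (map val t) =
   \sum_(r : 'I_B) \sum_(t : n.-tuple 'I_B) F (val r :: map val t))%N.
Proof.
rewrite pair_big /=.
rewrite (reindex (fun p : 'I_B * n.-tuple 'I_B => [tuple of p.1 :: p.2])) /=.
  by [].
exists (fun u : n.+1.-tuple 'I_B => (thead u, behead_tuple u)).
  move=> [x t] _ /=; rewrite theadE; congr pair; apply: val_inj => //.
move=> u _ /=; by rewrite [RHS]tuple_eta.
Qed.

Lemma sum_digit (B tn X Y : nat) : (tn < B)%N ->
  (\sum_(r < B) (if (r < tn)%N then X else if r == tn :> nat then Y else 0) = tn * X + Y)%N.
Proof.
move=> htn.
rewrite -(big_mkord xpredT (fun r => if (r < tn)%N then X else if r == tn then Y else 0)%N).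
rewrite (@big_cat_nat _ _ _ tn 0 B) ?(ltnW htn) //=.
rewrite big_nat_cond (eq_bigr (fun _ => X)); last by move=> i /andP[/andP[_ ->]].
rewrite -big_nat_cond sum_nat_const_nat subn0 mulnC.
rewrite big_ltn // ltnn eqxx big_nat_cond big1 ?addn0 //.
move=> i /andP[/andP[hi _] _]; rewrite ltnNge ltnW //= gtn_eqF //.
Qed.

Lemma card_tuples (n B : nat) : (\sum_(t : n.-tuple 'I_B) 1 = B ^ n)%N.
Proof. by rewrite sum1_card card_tuple card_ord. Qed.

Definition cnt b SS e n m :=
  (\sum_(t : n.-tuple 'I_(2^b)) (refine b SS e m (map val t) : nat))%N.

Lemma cnt_eq b SS e n m : 0 <= e + ((m + n) * b)%N%:Z ->
  (cnt b SS e n m.+1)%:R = frac (scaledW SS (e + (m * b)%N%:Z)) * ((2 ^ b)%N%:R) ^+ n.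
Proof.
elim: n m => [|n IH] m hk.
  rewrite addn0 in hk; rewrite /cnt big1 ?scaledW_int ?mul0r //; by case=> -[].
set y := scaledW SS (e + (m * b)%N%:Z).
have B0 : (0 < (2 ^ b)%N%:Z) by rewrite ltz_nat expn_gt0.
have [d0 dB hd] := @digit _ y B0.
set d := (Num.floor _ %% _)%Z in d0 dB hd.
set k := e + (m.+1 * b)%N%:Z.
have hk' : scaledW SS k = ((2 ^ b)%N%:Z)%:~R * y.
  have -> : k = (e + (m*b)%N%:Z) + b%:Z by rewrite /k mulSn PoszD; ring.
  by rewrite scaledW_add /y pmulrn.
have ht : (Num.floor (scaledW SS k) %% (2 ^ b)%N%:Z)%Z = d by rewrite hk'.
pose tn := `|d|%N.
have dtn : d = tn%:Z by rewrite /tn gez0_abs.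
have tnB : (tn < 2 ^ b)%N by rewrite -ltz_nat -dtn.
rewrite /cnt (sum_tuple_cons _ _ (fun s => nat_of_bool (refine b SS e m.+1 s))).
rewrite (eq_bigr (fun r : 'I_(2^b) => if (r < tn)%N then (2^b)^n
    else if val r == tn then (if (0 <= k)%R then 0 else cnt b SS e n m.+2) else 0))%N; last first.
  move=> r _ /=; rewrite -/k ht dtn ltz_nat.
  case: ltngtP => hr /=.
  - by rewrite card_tuples.
  - by rewrite ltz_nat hr /= big1.
  - rewrite hr ltxx /=; case: (0 <= k); first by rewrite big1.
    by [].
rewrite sum_digit // natrD natrM natrX.
case: (leP 0 k) => hk0 /=.
  have : frac (scaledW SS k) = 0 by apply: scaledW_int.
  rewrite hk' => h0; rewrite h0 addr0 in hd.
  rewrite dtn -!pmulrn in hd; rewrite addr0 -hd exprS; ring.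
have := IH m.+1; rewrite addSnnS => /(_ hk) ->.
rewrite -/k hk' dtn -!pmulrn in hd *.
rewrite exprS mulrA [frac y * _]mulrC hd; ring.
Qed.

Section Scan.
Variable N : nat.
Variable A : 'I_N -> nat.

Fixpoint pre (ls : seq 'I_N) (l : 'I_N) : nat :=
  match ls with [::] => 0%N | i :: ls' => if i == l then 0%N else (A i + pre ls' l)%N end.

Lemma scan_in ls x l c : scan A ls x = Some (l, c) -> l \in ls.
Proof.
elim: ls x => [|i ls IH] x //=.
case: ltnP => _; first by case=> -> _; rewrite mem_head.
case: eqP => _; first by case=> -> _; rewrite mem_head.
by move/IH; rewrite inE => ->; rewrite orbT.
Qed.

Lemma scan_exist ls l : l \in ls -> (0 < A l)%N ->
  scan A ls (pre ls l + A l) = Some (l, true).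
Proof.
elim: ls => [|i ls IH] //= hl hA.
case: eqP => [->|hne]; first by rewrite add0n ltnn eqxx.
rewrite inE in hl; case/orP: hl => [/eqP E|hl]; first by case: hne.
have h1 : (A i < A i + pre ls l + A l)%N by lia.
rewrite -addnA in h1.
rewrite -addnA ltnNge (ltnW h1) /= (gtn_eqF h1) addKn; exact: IH.
Qed.

Lemma scan_uniq ls x l : uniq ls -> scan A ls x = Some (l, true) ->
  x = (pre ls l + A l)%N.
Proof.
elim: ls x => [|i ls IH] x //= /andP[hi hu].
case: ltnP => h1; first by [].
case: eqP => h2; first by case=> <-; rewrite eqxx.
move=> hs; have hl := scan_in _ _ _ _ hs.
have -> : (i == l) = false by apply/negbTE; apply: contraNneq hi => ->.
have := IH _ hu hs; lia.
Qed.

Lemma pre_le ls l : l \in ls -> (pre ls l + A l <= \sum_(i <- ls) A i)%N.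
Proof.
elim: ls => [|i ls IH] //= hl; rewrite big_cons.
case: eqP => [->|hne]; first by rewrite add0n leq_addr.
rewrite inE in hl; case/orP: hl => [/eqP E|hl]; first by case: hne.
rewrite -addnA leq_add2l; exact: IH.
Qed.
End Scan.

Lemma sum_order_le N (A : 'I_N -> nat) (P : pred 'I_N) :
  (\sum_(i <- [seq i <- rev (enum 'I_N) | P i]) A i <= \sum_(i < N) A i)%N.
Proof.
rewrite big_filter big_rev big_mkcond /=.
rewrite big_enum /=.
apply: leq_sum => i _; by case: (P i).
Qed.

Lemma card_pair (M K B x0 : nat) (R : seq nat -> bool) :
  (1 <= x0 <= M)%N ->
  #|[pred p : 'I_M * K.-tuple 'I_B | (p.1.+1 == x0) && R (map val p.2)]| =
  (\sum_(t : K.-tuple 'I_B) R (map val t))%N.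
Proof.
move=> /andP[h1 h2].
have hM : (x0.-1 < M)%N by lia.
rewrite -sum1_card big_mkcond /=.
rewrite -(pair_big xpredT xpredT (fun (i : 'I_M) (t : K.-tuple 'I_B) =>
  if (i.+1 == x0) && R (map val t) then 1%N else 0%N)) /=.
rewrite (bigD1 (Ordinal hM)) //= [X in (_ + X)%N]big1 ?addn0.
  apply: eq_bigr => t _; have -> : (x0.-1.+1 == x0) by apply/eqP; lia.
  by case: (R _).
move=> i hi; apply: big1 => t _.
have -> : (i.+1 == x0) = false.
  apply/negbTE; apply: contra hi => /eqP E; apply/eqP; apply: val_inj => /=; lia.
by [].
Qed.

Theorem mainTheorem1 (b : nat) (lo : int) (N : nat) (sig : 'I_N -> seq nat)
  (G : int) (l : 'I_N) (K : nat) :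
  (2 <= b)%N ->
  (forall i : 'I_N, all (fun s => (2 ^ b.-1 <= s < 2 ^ b)%N) (sig i)) ->
  (\sum_(i < N) size (sig i) < 2 ^ b)%N ->
  (0 < SSum (sig l))%N ->
  (* K draws suffice: the refinement loop at level l stops by step K *)
  (1 <= K)%N -> 0 <= lvl_exp lo l G + (K * b)%N%:Z ->
  let f := scaledW (SSum (sig l)) (lvl_exp lo l G)
           - (Num.floor (scaledW (SSum (sig l)) (lvl_exp lo l G)))%:~R in
  cond_prob (accept_ev b lo N sig G K l) (boundary_ev b lo N sig G K l) = f /\
  cond_prob (abandon_ev b lo N sig G K l) (boundary_ev b lo N sig G K l) = 1 - f.
Proof.
move=> _ _ _ hSS _ hK f.
set A := Aof b lo sig G.
set ls := scan_order sig.
set SS := SSum (sig l).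
set e := lvl_exp lo l G.
have hAl : (0 < A l)%N by rewrite /A /Aof /Aval hSS.
have hls : l \in ls by rewrite /ls /scan_order mem_filter hSS mem_rev mem_enum.
have hu : uniq ls by rewrite /ls /scan_order filter_uniq // rev_uniq enum_uniq.
set x0 := (pre _ A ls l + A l)%N.
have hx0 : (1 <= x0 <= Atot b lo sig G)%N.
  apply/andP; split; first by rewrite /x0; lia.
  apply: leq_trans (pre_le _ A _ _ hls) _; exact: sum_order_le.
have hb : forall x, (scan A ls x == Some (l, true)) = (x == x0).
  move=> x; apply/eqP/eqP => [|->]; first exact: scan_uniq _ _ _ _ _ hu.
  exact: scan_exist _ _ _ _ hls hAl.
pose R := fun s : seq nat => refine b SS e 1 s.
have hC : #|boundary_ev b lo N sig G K l| = ((2^b)^K)%N.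
  rewrite -(card_tuples K (2^b)).
  transitivity (\sum_(t : K.-tuple 'I_(2^b)) (fun _ : seq nat => true) (map val t))%N; last by apply: eq_bigr.
  rewrite -(@card_pair _ K (2^b) x0 (fun _ : seq nat => true) hx0).
  by apply: eq_card => p; rewrite unfold_in /boundary_ev /= -/A -/ls hb inE andbT.
have hAcc : #|[pred p | accept_ev b lo N sig G K l p && boundary_ev b lo N sig G K l p]| =
   #|[pred p : sample_space b lo sig G K | (p.1.+1 == x0) && R (map val p.2)]|.
  apply: eq_card => p; rewrite unfold_in inE /accept_ev /boundary_ev /outer_iter /=.
  rewrite -/A -/ls -hb; case: (scan A ls _) => [[i c]|] //=.
  case: eqP => [[-> ->]|] //=.
  by rewrite /R /SS /e; case: refine => //=; rewrite eqxx.
have hAb : #|[pred p | abandon_ev b lo N sig G K l p && boundary_ev b lo N sig G K l p]| =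
   #|[pred p : sample_space b lo sig G K | (p.1.+1 == x0) && (fun s => ~~ R s) (map val p.2)]|.
  apply: eq_card => p; rewrite unfold_in inE /abandon_ev /boundary_ev /outer_iter /=.
  rewrite -/A -/ls -hb; case: (scan A ls _) => [[i c]|] //=.
  case: eqP => [[-> ->]|] //=.
  by rewrite /R /SS /e; case: refine.
rewrite /cond_prob hC hAcc hAb !card_pair //.
have hT : (\sum_(t : K.-tuple 'I_(2 ^ b)) (fun _ => true) (map val t) = (2 ^ b) ^ K)%N.
  by rewrite -(card_tuples K (2^b)); apply: eq_bigr.
have hsplit : (\sum_(t : K.-tuple 'I_(2 ^ b)) (~~ R (map val t)) +
              \sum_(t : K.-tuple 'I_(2 ^ b)) R (map val t) = (2 ^ b) ^ K)%N.
  rewrite -big_split /= -(card_tuples K (2^b)); apply: eq_bigr => t _; by case: (R _).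
have hcnt : (\sum_(t : K.-tuple 'I_(2 ^ b)) R (map val t))%:R = f * ((2 ^ b) ^ K)%N%:R.
  have := @cnt_eq b SS e K 0; rewrite add0n mul0n addr0 => /(_ hK) ->.
  rewrite [in RHS]natrX /f -/(frac _); congr (_ * _); rewrite /SS /e //.
have hBK : ((2 ^ b) ^ K)%N%:R != 0 :> rat by rewrite pnatr_eq0 -lt0n !expn_gt0.
rewrite (@card_pair _ K (2^b) x0 (fun s => ~~ R s) hx0); split.
  by rewrite hcnt mulfK.
have -> : (\sum_(t : K.-tuple 'I_(2 ^ b)) (~~ R (map val t)))%N =
   ((2 ^ b) ^ K - \sum_(t : K.-tuple 'I_(2 ^ b)) R (map val t))%N by rewrite -hsplit addnK.
rewrite natrB; last by rewrite -hsplit leq_addl.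
rewrite hcnt mulrBl mulfK // divff //.
Qed.
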